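(* Let $q$ be an odd prime power, $\lambda$ a divisor of $q+1$ with $2\le\lambda<q+1$, $m=2t+1\ge5$, and $n=\frac{q^m+1}{\lambda}$. For integers $a,b,c$ let $f(a,b,c)=\frac{q^{t+1}+1}{\lambda}+a\frac{q^t-1}{\lambda}+bq^t+c$ and $g(a,b,c)=\frac{q^{t+1}-1}{\lambda}+a\frac{q^t+1}{\lambda}+bq^t+c$. If $t$ is even, let $T_1=\{f(0,0,c):c\in\mathbb{Z},-\frac q\lambda\le c\le\frac{q-2}{\lambda}\}$, $T_2=\{f(0,b,0):b\in\mathbb{Z},1\le b\le\frac{q-1}{\lambda}\}$, $T_3=\{f(2,b,0):b\in\mathbb{Z},0\le b\le\frac{q-3}{\lambda}\}$. If $t$ is odd, let $T_1=\{g(0,0,c):c\in\mathbb{Z},-\frac{q-2}{\lambda}\le c\le\frac q\lambda\}$, $T_2=\{g(0,b,0):b\in\mathbb{Z},1\le b\le\frac{q-1}{\lambda}\}$, $T_3=\{g(2,b,0):b\in\mathbb{Z},0\le b\le\frac{q-3}{\lambda}\}$. Then: (1) every integer $i$ with $1\le i<\frac{2q^{t+1}-2q+1}{\lambda}$, $i\not\equiv0\pmod q$ and $i\notin T_1\cup T_2\cup T_3$ is a coset leader modulo $n$ with $|C_i|=2m$, while no element of $T_1\cup T_2\cup T_3$ (with $i\not\equiv 0\pmod q$) is a coset leader modulo $n$; (2) no integer $i$ with $\frac{2q^{t+1}-2q+1}{\lambda}\le i\le\frac{2q^{t+1}+2q-1}{\lambda}$ is a coset leader modulo $n$.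
   Context: For $0\le s\le n-1$, $C_s=\{sq^i\bmod n:i\ge0\}$ is the $q$-cyclotomic coset of $s$ modulo $n$; its least element is its coset leader. *)

(* Defs.v *)
From HB Require Import structures.
From mathcomp Require Import all_boot all_order all_algebra.
From mathcomp Require Import boolp.
Set Implicit Arguments. Unset Strict Implicit. Unset Printing Implicit Defensive.
Import Order.TTheory GRing.Theory Num.Theory.

Definition prime_power (q : nat) : Prop :=
  exists p k : nat, prime p /\ 0 < k /\ q = p ^ k.

Definition cyc_coset (q n s : nat) (x : nat) : Prop :=
  exists i : nat, x = (s * q ^ i) %% n.

Definition cyc_coset_set (q n s : nat) : {set 'I_n} :=
  [set x : 'I_n | `[< cyc_coset q n s (nat_of_ord x) >] ].

Definition coset_leader (q n s : nat) : Prop :=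
  cyc_coset q n s s /\ forall x, cyc_coset q n s x -> s <= x.

(* f(a,b,c) and g(a,b,c) as integers (the divisions are exact in the
   parity cases where they are used). *)
Definition f_val (q lam t : nat) (a b : nat) (c : int) : int :=
  (((q ^ t.+1 + 1) %/ lam)%N)%:Z + (a * ((q ^ t - 1) %/ lam))%N%:Z
  + (b * q ^ t)%N%:Z + c.

Definition g_val (q lam t : nat) (a b : nat) (c : int) : int :=
  (((q ^ t.+1 - 1) %/ lam)%N)%:Z + (a * ((q ^ t + 1) %/ lam))%N%:Z
  + (b * q ^ t)%N%:Z + c.

Local Open Scope ring_scope.

Definition in_T (q lam t : nat) (i : nat) : Prop :=
  if ~~ odd t then
    (exists c : int, - (q%:Z) <= c * lam%:Z /\ c * lam%:Z <= q%:Z - 2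
                     /\ i%:Z = f_val q lam t 0 0 c)
    \/ (exists b : nat, (1 <= b)%N /\ (b * lam <= q - 1)%N
                     /\ i%:Z = f_val q lam t 0 b 0)
    \/ (exists b : nat, (b * lam <= q - 3)%N
                     /\ i%:Z = f_val q lam t 2 b 0)
  else
    (exists c : int, - (q%:Z - 2) <= c * lam%:Z /\ c * lam%:Z <= q%:Z
                     /\ i%:Z = g_val q lam t 0 0 c)
    \/ (exists b : nat, (1 <= b)%N /\ (b * lam <= q - 1)%N
                     /\ i%:Z = g_val q lam t 0 b 0)
    \/ (exists b : nat, (b * lam <= q - 3)%N
                     /\ i%:Z = g_val q lam t 2 b 0).

(* Main.v *)
Require Import Defs.
From HB Require Import structures.
From mathcomp Require Import all_boot all_order all_algebra.
From mathcomp Require Import boolp.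
From mathcomp Require Import zify.

Set Implicit Arguments. Unset Strict Implicit. Unset Printing Implicit Defensive.

Lemma case_d q Q A r : 3 <= q -> q * q <= Q -> r < q * Q -> 1 <= A * (q * Q) + r -> A * (q * Q) + r <= 2 * q * Q - 2 * q -> A * (q * Q) + r <> q * Q ->
  (A <= r * Q) /\ (r * Q - A <= q * Q * Q) /\
  ((A * (q * Q) + r < r * Q - A /\ r * Q - A + (A * (q * Q)+r) < q * Q * Q + 1) \/
   (exists d, d <= q-1 /\ A * (q * Q) + r + d = q * Q) \/ (exists r', 1 <= r' <= q /\ A * (q * Q) + r = q * Q + r')).
Proof.
move=> q3 qQ rq I1 IB Ine.
have A1 : A <= 1 by nia.
have [A0|A1'] : A = 0 \/ A = 1 by lia.
- subst A. rewrite mul0n add0n in I1 IB Ine *. split; first lia.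
  split; first nia.
  have [d|d] : q * Q - r <= q - 1 \/ q <= q * Q - r by lia.
  + right; left; exists (q * Q - r); lia.
  + left; nia.
- subst A. rewrite mul1n in I1 IB Ine *. split; first nia. split; first nia.
  have [d|d] : r <= q \/ q+1 <= r by lia.
  + right; right; exists r; lia.
  + left; nia.
Qed.
Lemma case_b q Q K P A r : 3 <= q -> q * q <= Q -> K * P = q * Q * Q -> q <= K -> q * q * Q <= P -> 1 <= r < K ->
   A * K + r <= 2 * q * Q ->
  (A <= r * P) /\ (r * P - A <= q * Q * Q) /\
  (A * K + r < r * P - A /\ r * P - A + (A * K+r) < q * Q * Q + 1).
Proof.
move=> q3 qQ KP qK qP /andP[r1 rK] IB.
have AI : 3 * A <= 2 * q * Q by nia.
have P3 : 3 * q * Q <= P by nia.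
have rP : r * P <= q * Q * Q - P.
  have : r * P <= (K-1) * P by apply: leq_mul; lia.
  nia.
split; first nia. split; first nia. split; nia.
Qed.
Lemma case_a q Q P I : 3 <= q -> q * q <= Q -> 3 <= P -> P * q <= Q -> 1 <= I -> I <= 2 * q * Q ->
  I * P <= q * Q * Q /\ I < I * P /\ I * P + I < q * Q * Q + 1.
Proof.
move=> q3 qQ P3 Pq I1 IB.
split; first nia. split; first nia. nia.
Qed.
Lemma mod_form X A B M : X = A * M + B -> A <= B -> B - A <= M -> X %% (M+1) = B - A.
Proof.
move=> -> AB BM.
have -> : A * M + B = A * (M+1) + (B - A) by nia.
by rewrite modnMDl modn_small //; lia.
Qed.
Lemma flip X M : 0 < X %% (M+1) -> (X * M) %% (M+1) = M+1 - X %% (M+1).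
Proof.
move=> v0; rewrite -modnMml.
set v := X %% (M+1).
have vM : v < M+1 by rewrite ltn_pmod //; lia.
have -> : v * M = (v-1) * (M+1) + (M+1-v) by nia.
by rewrite modnMDl modn_small //; lia.
Qed.
Lemma bad2 q Q I B : 3 <= q -> q * q <= Q -> q+1 <= B <= 2 * q -> I + 1 = B * Q ->
  (I * (q * Q * (q * Q * Q))) %% (q * Q * Q+1) < I.
Proof.
move=> q3 qQ HB HI.
have Q3 : 3 * q <= Q by nia.
have BQ : q * Q + Q <= B * Q by nia.
have P3 : 3 * q <= q * Q by nia.
rewrite mulnA.
move: (q * Q) P3 BQ => P P3 BQ.
have HIP0 : (I+1) * P = B * Q * P by rewrite HI.
have HIP : I * P + P = B * (P * Q) by nia.
have QP : (Q-1) * P + P = P * Q by nia.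
have QP1 : P <= (Q-1) * P by nia.
have H1 : (I * P) %% (P * Q+1) = (Q-1) * P - (B-1).
  apply: mod_form.
  - have : (B-1) * (P * Q) + P * Q = B * (P * Q) by nia.
    lia.
  - lia.
  - lia.
have v0 : 0 < (Q-1) * P - (B-1) by lia.
rewrite flip H1 //.
lia.
Qed.
Lemma bad3 q Q I d : 3 <= q -> q * q <= Q -> d <= q-1 -> I + d = q * Q ->
  (I * (Q * (q * Q * Q))) %% (q * Q * Q+1) < I.
Proof.
move=> q3 qQ Hd HI.
have Q3 : 3 * q <= Q by nia.
have dQ : d * Q + Q <= q * Q by nia.
have P3 : 3 * q <= q * Q by nia.
rewrite mulnA.
move: (q * Q) P3 dQ HI => P P3 dQ HI.
have HIP : I * Q + d * Q = P * Q by rewrite -mulnDl HI.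
have H1 : (I * Q) %% (P * Q+1) = I * Q by rewrite modn_small //; lia.
have v0 : 0 < I * Q by nia.
rewrite flip H1 //; lia.
Qed.
Lemma bad4 q Q I r : 3 <= q -> q * q <= Q -> 1 <= r <= q -> I = q * Q + r ->
  (I * Q) %% (q * Q * Q+1) < I.
Proof.
move=> q3 qQ Hr HI.
have rQ : r * Q <= q * Q by nia.
move: (q * Q) rQ HI => P rQ HI.
rewrite (@mod_form _ 1 (r * Q)); [lia| rewrite HI; nia | nia | nia].
Qed.
Lemma bad5 q Q I : 3 <= q -> q * q <= Q -> 2 * q * Q - 2 * q + 1 <= I <= 2 * q * Q - 1 ->
  (I * (Q * (q * Q * Q))) %% (q * Q * Q+1) < I.
Proof.
move=> q3 qQ HI.
have Q3 : 3 * q <= Q by nia.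
have P3 : 3 * q <= q * Q by nia.
rewrite mulnA.
move Pd : (q * Q) => P.
have HI' : 2 * P - 2 * q + 1 <= I <= 2 * P - 1 by rewrite -Pd; lia.
have F1 : (I - P) * Q + (2 * P - I) * Q = P * Q by rewrite -mulnDl; congr (_ * _); lia.
have F2 : (2 * P - I) * Q <= (2 * q-1) * Q by apply: leq_mul => //; lia.
have F3 : (2 * q-1) * Q + Q = 2 * P by rewrite -Pd; nia.
have F4 : Q <= (I-P) * Q by rewrite -{1}(mul1n Q); apply: leq_mul => //; lia.
have F5 : I * Q = P * Q + (I-P) * Q by rewrite -mulnDl; congr (_ * _); lia.
have H1 : (I * Q) %% (P * Q+1) = (I - P) * Q - 1.
  apply: mod_form; lia.
have v0 : 0 < (I - P) * Q - 1 by lia.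
rewrite flip H1 //.
lia.
Qed.
Lemma bad6 q Q I r : 3 <= q -> q * q <= Q -> 1 <= r <= 2 * q-1 -> I = 2 * q * Q + r ->
  (I * Q) %% (q * Q * Q+1) < I.
Proof.
move=> q3 qQ Hr HI.
have rQ : r * Q <= 2 * q * Q by nia.
rewrite -mulnA in HI rQ *.
move: (q * Q) rQ HI => P rQ HI.
rewrite (@mod_form _ 2 (r * Q)); [lia| rewrite HI; nia | nia | nia].
Qed.
Lemma case_c q Q A r : 3 <= q -> q * q <= Q -> 0 < r < Q -> A * Q + r <= 2 * q * Q - 2 * q ->
  (A <= r * (q * Q)) /\ (r * (q * Q) - A <= q * Q * Q) /\
  ((A * Q + r < r * (q * Q) - A /\ r * (q * Q) - A + (A * Q+r) < q * Q * Q + 1) \/ (r = 1 /\ q+1 <= A /\ A <= 2 * q-1) \/ (r = 1 /\ A = q) \/ (r = Q - 1 /\ q <= A)).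
Proof.
move=> q3 qQ /andP[r0 rQ] IB.
have A2q : A < 2 * q by nia.
have Q3 : 3 * q <= Q by nia.
split; first nia.
split; first nia.
have [r1|r2] : r = 1 \/ 2 <= r by lia.
- subst r. have [Aq|Aq] : A <= q - 1 \/ q <= A by lia.
  + left; nia.
  + have [->|] : A = q \/ q+1 <= A by lia. by right; right; left.
    by right; left; lia.
- have [rq|rq] : r = Q - 1 \/ r <= Q - 2 by lia.
  + have [Aq|Aq] : A <= q - 1 \/ q <= A by lia.
    * left; subst r; nia.
    * by right; right; right.
  + left; nia.
Qed.
Lemma bad1 q Q A : 3 <= q -> q * q <= Q -> q <= A <= 2 * q-1 -> ((A * Q+1) * (q * Q)) %% (q * Q * Q+1) < A * Q+1.
Proof.
move=> q3 qQ HA.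
have Q3 : 3 * q <= Q by nia.
rewrite (@mod_form _ A (q * Q)).
- nia.
- nia.
- nia.
- nia.
Qed.


Definition Fset q Q I : Prop :=
  (exists A, q <= A <= 2 * q-1 /\ I = A * Q+1) \/ (exists B, q+1 <= B <= 2 * q /\ I + 1 = B * Q) \/
  (exists d, d <= q-1 /\ I + d = q * Q) \/ (exists r, 1 <= r <= q /\ I = q * Q + r).

Lemma pow_dvd_q q k I : 1 <= k -> q ^ k %| I -> q %| I.
Proof.
move=> k1 H; apply: dvdn_trans H.
by case: k k1 => // k _; rewrite expnS dvdn_mulr.
Qed.

Lemma core q t I j : 3 <= q -> 2 <= t -> 1 <= I -> I <= 2 * q * q ^ t - 2 * q -> ~~ (q %| I) -> 1 <= j <= 2 * t ->
  (I < (I * q ^ j) %% (q * q ^ t * q ^ t+1) /\ (I * q ^ j) %% (q * q ^ t * q ^ t+1) + I < q * q ^ t * q ^ t+1) \/ Fset q (q ^ t) I.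
Proof.
move=> q3 t2 I1 IB nqI /andP[j1 j2].
have qQ : q * q <= q ^ t.
  have : q ^ 2 <= q ^ t by apply: leq_pexp2l; lia.
  by rewrite expnS expn1.
have [jt|[jt|[jt|jt]]] : j <= t-1 \/ j = t \/ j = t.+1 \/ t.+2 <= j by lia.
- left.
  have P3 : 3 <= q ^ j.
    have : q ^ 1 <= q ^ j by apply: leq_pexp2l; lia.
    rewrite expn1; lia.
  have Pq : q ^ j * q <= q ^ t.
    rewrite -expnSr; apply: leq_pexp2l; lia.
  have [H1 [H2 H3]] := case_a q3 qQ P3 Pq I1 (leq_trans IB (leq_subr _ _)).
  rewrite modn_small; lia.
- subst j.
  move: qQ IB; move Qd : (q ^ t) => Q qQ IB.
  have Idef := divn_eq I (q * Q).
  have rlt : I %% (q * Q) < q * Q by rewrite ltn_pmod //; nia.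
  have Ine : I <> q * Q by move=> E; move: nqI; rewrite E dvdn_mulr.
  move: Idef rlt Ine I1 IB nqI.
  move: (I %/ (q * Q)) (I %% (q * Q)) => A r -> rlt Ine I1 IB nqI.
  have [H1 [H2 [H3|H3]]] := case_d q3 qQ rlt I1 IB Ine.
  + have V : ((A * (q * Q) + r) * Q) %% (q * Q * Q+1) = r * Q - A.
      apply: mod_form => //. rewrite mulnDl; congr (_ + _); by rewrite -!mulnA.
    left; rewrite V; lia.
  + right; rewrite /Fset. case: H3 => [[d Hd]|[r' Hr]].
    * right; right; left; exists d; lia.
    * right; right; right; exists r'; lia.
- subst j.
  rewrite expnS.
  move: qQ IB; move Qd : (q ^ t) => Q qQ IB.
  have Idef := divn_eq I Q.
  have rlt : I %% Q < Q by rewrite ltn_pmod //; nia.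
  have r0 : 0 < I %% Q.
    rewrite lt0n; apply/negP => /eqP E; move/negP: nqI; apply.
    apply: (@pow_dvd_q q t); first lia.
    by rewrite Qd /dvdn E.
  move: Idef rlt r0 I1 IB nqI.
  move: (I %/ Q) (I %% Q) => A r -> rlt r0 I1 IB nqI.
  have [H1 [H2 [H3|[H3|[H3|H3]]]]] := case_c q3 qQ (introT andP (conj r0 rlt)) IB.
  + have V : ((A * Q + r) * (q * Q)) %% (q * Q * Q+1) = r * (q * Q) - A.
      apply: mod_form => //. rewrite mulnDl; congr (_ + _). nia.
    left; rewrite V; lia.
  + right; left; exists A; lia.
  + right; left; exists A; lia.
  + right; right; left; exists A.+1; split; first nia.
    lia.
- left.
  have Kdef : q ^ (2 * t+1-j) * q ^ j = q * q ^ t * q ^ t.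
    rewrite -expnD.
    have -> : 2 * t+1-j + j = (t + t).+1 by lia.
    by rewrite expnS expnD mulnA.
  have qK : q <= q ^ (2 * t+1-j).
    have : q ^ 1 <= q ^ (2 * t+1-j) by apply: leq_pexp2l; lia.
    by rewrite expn1.
  have qP : q * q * q ^ t <= q ^ j.
    have : q ^ (t.+2) <= q ^ j by apply: leq_pexp2l; lia.
    by rewrite !expnS mulnA.
  move: Kdef qK qP qQ IB; move Qd : (q ^ t) => Q.
  have k1 : 1 <= 2 * t+1-j by lia.
  move: k1; move: (2 * t+1-j) => k k1.
  have Idef := divn_eq I (q ^ k).
  have rlt : I %% q ^ k < q ^ k by rewrite ltn_pmod // expn_gt0; lia.
  have r0 : 0 < I %% q ^ k.
    rewrite lt0n; apply/negP => /eqP E; move/negP: nqI; apply.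
    apply: (@pow_dvd_q q k) => //.
    by rewrite /dvdn E.
  move: Idef rlt r0 I1 nqI.
  move: (q ^ k) (q ^ j) => K P Idef rlt r0 I1 nqI KP qK qP qQ IB.
  move: Idef rlt r0 I1 nqI IB.
  move: (I %/ K) (I %% K) => A r -> rlt r0 I1 nqI IB.
  have [H1 [H2 H3]] := case_b q3 qQ KP qK qP (introT andP (conj r0 rlt)) (leq_trans IB (leq_subr _ _)).
  have V : ((A * K + r) * P) %% (q * Q * Q+1) = r * P - A.
    apply: mod_form => //. by rewrite mulnDl -KP mulnA.
  rewrite V; lia.
Qed.


Lemma not_leader q lam n i e : 0 < lam -> (lam * i * q ^ e) %% (lam * n) < lam * i -> ~ coset_leader q n i.
Proof.
move=> l0 H [_ Hmin].
have := Hmin ((i * q ^ e) %% n) (ex_intro _ e erefl).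
move: H; rewrite -mulnA -muln_modr ltn_pmul2l //.
lia.
Qed.

Lemma modM_congr X Y Z N : X %% N = Y %% N -> (X * Z) %% N = (Y * Z) %% N.
Proof. by move=> H; rewrite -modnMml H modnMml. Qed.

Lemma leader_good q lam n i m : 0 < q -> 0 < lam -> 0 < m -> lam * n = q ^ m + 1 -> 1 <= i -> 2 * (lam * i) < lam * n ->
  (forall j, 1 <= j <= m-1 -> lam * i < (lam * i * q ^ j) %% (lam * n) /\ (lam * i * q ^ j) %% (lam * n) + lam * i < lam * n) ->
  coset_leader q n i /\ #|cyc_coset_set q n i| = 2 * m.
Proof.
move=> q0 l0 m0 Nd i1 IN Hj.
have n0 : 0 < n by rewrite lt0n; apply/eqP => E; move: IN; rewrite E muln0.
have iN : i < n by rewrite -(ltn_pmul2l l0); lia.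
have I0 : (lam * i) %% (lam * n) = lam * i by rewrite modn_small //; lia.
have S1 : forall d, 0 < d < 2 * m -> lam * i < (lam * i * q ^ d) %% (lam * n).
  move=> d /andP[d0 d2].
  have [dm|dm] := ltnP d m.
  - by case: (Hj d); first lia.
  - have [j Ej] : exists j, d = j + m by exists (d - m); lia.
    rewrite Ej.
    rewrite expnD mulnA Nd flip -Nd.
    + have [j0|j0] : j = 0 \/ 1 <= j by lia.
      * rewrite j0 expn0 muln1 I0; lia.
      * case: (Hj j); lia.
    + have [j0|j0] : j = 0 \/ 1 <= j by lia.
      * rewrite j0 expn0 muln1 I0; lia.
      * case: (Hj j); lia.
have S2 : q ^ (2 * m) %% (lam * n) = 1.
  rewrite mulnC expnM Nd.
  have M1 : 1 <= q ^ m by rewrite expn_gt0 q0.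
  move: M1; move: (q ^ m) => M M1.
  have -> : M ^ 2 = (M-1) * (M+1) + 1 by rewrite expnS expn1; nia.
  rewrite modnMDl modn_small //; lia.
have S3 : forall e X, (X * q ^ e) %% (lam * n) = (X * q ^ (e %% (2 * m))) %% (lam * n).
  move=> e X.
  have E : q ^ e = (q ^ (2 * m)) ^ (e %/ (2 * m)) * q ^ (e %% (2 * m)).
    by rewrite -expnM -expnD [2 * m * _]mulnC -divn_eq.
  rewrite E mulnCA -modnMml -modnXm S2 exp1n.
  by rewrite (modn_small (_ : 1 < lam * n)) ?mul1n //; lia.
have S3n : forall e, (i * q ^ e) %% n = (i * q ^ (e %% (2 * m))) %% n.
  move=> e; apply/eqP; rewrite -(eqn_pmul2l l0) !muln_modr !mulnA.
  by rewrite S3.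
have S4 : forall e, lam * i <= (lam * i * q ^ e) %% (lam * n).
  move=> e; rewrite S3.
  have [e0|e0] : e %% (2 * m) = 0 \/ 0 < e %% (2 * m) by lia.
  - by rewrite e0 expn0 muln1 I0.
  - apply: ltnW; apply: S1; rewrite e0 ltn_pmod //; lia.
split.
- split.
  + by exists 0; rewrite expn0 muln1 modn_small.
  + move=> x [e ->].
    rewrite -(leq_pmul2l l0) muln_modr mulnA; exact: S4.
- pose f (j : 'I_(2 * m)) : 'I_n := Ordinal (ltn_pmod (i * q ^ j) n0).
  have -> : cyc_coset_set q n i = f @: setT.
    apply/setP => x; rewrite inE; apply/asboolP/imsetP.
    + move=> [e He].
      have jl : e %% (2 * m) < 2 * m by rewrite ltn_pmod //; lia.
      exists (Ordinal jl) => //.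
      by apply: val_inj; rewrite /= He S3n.
    + by move=> [j _ ->]; exists j.
  rewrite card_imset ?cardsT ?card_ord //.
  move=> a b /(congr1 val) /= Hab.
  have HN : (lam * i * q ^ a) %% (lam * n) = (lam * i * q ^ b) %% (lam * n).
    by rewrite -!mulnA -!muln_modr Hab.
  apply: val_inj => /=.
  have key : forall a b : 'I_(2 * m), (lam * i * q ^ a) %% (lam * n) = (lam * i * q ^ b) %% (lam * n) -> (a < b)%N -> False.
    move=> a' b' H ab.
    have := @modM_congr _ _ (q ^ (2 * m - b')) _ H.
    rewrite -!mulnA -!expnD.
    have -> : b' + (2 * m - b') = 2 * m by rewrite subnKC // ltnW // ltn_ord.
    rewrite !mulnA (S3 (2 * m)) modnn expn0 muln1 I0 => E.
    have hd : 0 < a' + (2 * m - b') < 2 * m.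
      have := ltn_ord b'; move: ab; clear; move: (nat_of_ord a') (nat_of_ord b') => x y; lia.
    by have := S1 _ hd; rewrite E ltnn.
  case: (ltngtP a b) => // ab; exfalso.
  + exact: key HN ab.
  + exact: key (esym HN) ab.
Qed.

Section ConvSec.
Import GRing.Theory Num.Theory.
Local Open Scope ring_scope.

Lemma T_to_F_even q lam t i : (3 <= q)%N -> (2 <= lam)%N -> (lam %| q+1)%N -> odd t = false -> (q * q <= q ^ t)%N ->
  ((q ^ t.+1 + 1) %/ lam * lam = q ^ t.+1 + 1)%N -> ((q ^ t - 1) %/ lam * lam = q ^ t - 1)%N ->
  ~~ (q %| lam * i)%N -> in_T q lam t i -> Fset q (q ^ t) (lam * i).
Proof.
move=> q3 l2 lq Hp qQ HD1 HD2 nq; rewrite /in_T Hp /= /f_val.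
rewrite expnS in HD1 *.
move: HD1 HD2; move: ((q * q ^ t + 1) %/ lam)%N => D1 HD1 HD2.
move: HD2; move: ((q ^ t - 1) %/ lam)%N => D2 HD2.
move: HD1 HD2 qQ nq; move: (q ^ t)%N => Q HD1 HD2 qQ nq.
have Q1 : (1 <= Q)%N by nia.
case=> [[c [c1 [c2 Hi]]]|[[b [b1 [b2 Hi]]]|[b [b2 Hi]]]].
- have H5 : (lam * i)%:Z = (q * Q+1)%:Z + c * lam%:Z.
    rewrite -HD1 PoszM Hi PoszM. nia.
  rewrite /Fset.
  move: H5 c1 c2 nq; move: (c * lam%:Z) (lam * i)%N (q * Q)%N => y X P H5 c1 c2 nq.
  have [cn|cp] : y <= -1 \/ 0 <= y by lia.
  + right; right; left; exists (P - X)%N. lia.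
  + right; right; right; exists (X - P)%N; lia.
- have H5 : (lam * i)%N = (q * Q+1 + b * lam * Q)%N.
    have : (i = D1 + b * Q)%N by lia.
    move=> ->; clear -HD1; nia.
  left; exists (q + b * lam)%N; rewrite H5; split; first lia.
  clear; nia.
- have H5 : (lam * i + 1 = (q + 2 + b * lam) * Q)%N.
    have : (i = D1 + 2 * D2 + b * Q)%N by lia.
    move=> ->; clear -HD1 HD2 Q1; nia.
  right; left; exists (q + 2 + b * lam)%N; rewrite H5; split; first lia.
  done.
Qed.

Lemma T_to_F_odd q lam t i : (3 <= q)%N -> (2 <= lam)%N -> (lam %| q+1)%N -> odd t = true -> (q * q <= q ^ t)%N ->
  ((q ^ t.+1 - 1) %/ lam * lam = q ^ t.+1 - 1)%N -> ((q ^ t + 1) %/ lam * lam = q ^ t + 1)%N ->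
  ~~ (q %| lam * i)%N -> in_T q lam t i -> Fset q (q ^ t) (lam * i).
Proof.
move=> q3 l2 lq Hp qQ HD1 HD2 nq; rewrite /in_T Hp /= /g_val.
rewrite expnS in HD1 *.
move: HD1 HD2; move: ((q * q ^ t - 1) %/ lam)%N => D1 HD1 HD2.
move: HD2; move: ((q ^ t + 1) %/ lam)%N => D2 HD2.
move: HD1 HD2 qQ nq; move: (q ^ t)%N => Q HD1 HD2 qQ nq.
have Q1 : (1 <= Q)%N by nia.
have P1 : (1 <= q * Q)%N by nia.
case=> [[c [c1 [c2 Hi]]]|[[b [b1 [b2 Hi]]]|[b [b2 Hi]]]].
- have H5 : (lam * i)%:Z = (q * Q-1)%:Z + c * lam%:Z.
    rewrite -HD1 PoszM Hi PoszM. nia.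
  rewrite /Fset.
  move: H5 c1 c2 nq P1; move: (c * lam%:Z) (lam * i)%N (q * Q)%N => y X P H5 c1 c2 nq P1.
  have [cn|cp] : y <= 1 \/ 2 <= y by lia.
  + right; right; left; exists (P - X)%N; lia.
  + right; right; right; exists (X - P)%N; lia.
- have H5 : (lam * i + 1)%N = ((q + b * lam) * Q)%N.
    have : (i = D1 + b * Q)%N by lia.
    move=> ->; clear -HD1 P1; nia.
  right; left; exists (q + b * lam)%N; rewrite H5; split; last done.
  have : (1 <= b * lam)%N by rewrite muln_gt0; apply/andP; split; lia.
  lia.
- have H5 : (lam * i)%N = ((q + 2 + b * lam) * Q + 1)%N.
    have : (i = D1 + 2 * D2 + b * Q)%N by lia.
    move=> ->; clear -HD1 HD2 P1; nia.
  left; exists (q + 2 + b * lam)%N; rewrite H5; split; last done.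
  lia.
Qed.



Lemma dvd_helper lam x y z : (x + y = lam * z)%N -> (lam %| y)%N -> (lam %| x)%N.
Proof. move=> E Hy; have : (lam %| x + y)%N by rewrite E dvdn_mulr. by rewrite dvdn_addl. Qed.

Lemma cancel_lam lam x y : (0 < lam)%N -> (lam * x = lam * y)%N -> x = y.
Proof. by move=> l0 /eqP; rewrite eqn_pmul2l // => /eqP. Qed.

Lemma no_dvd_q q lam : (2 <= lam)%N -> (lam %| q+1)%N -> ~~ (lam %| q)%N.
Proof.
move=> l2 lq; apply/negP => lq'.
move: lq; rewrite dvdn_addr // dvdn1; lia.
Qed.

Lemma F_to_T_even q lam t i : (3 <= q)%N -> (2 <= lam)%N -> (lam %| q+1)%N -> odd t = false -> (q * q <= q ^ t)%N ->
  ((q ^ t.+1 + 1) %/ lam * lam = q ^ t.+1 + 1)%N -> ((q ^ t - 1) %/ lam * lam = q ^ t - 1)%N ->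
  ~~ (q %| lam * i)%N -> (lam * i <= 2 * q * q ^ t - 2 * q)%N -> Fset q (q ^ t) (lam * i) -> in_T q lam t i.
Proof.
move=> q3 l2 lq Hp qQ HD1 HD2 nq IB; rewrite /in_T Hp /= /f_val.
rewrite expnS in HD1 *.
move: HD1 HD2; move: ((q * q ^ t + 1) %/ lam)%N => D1 HD1 HD2.
move: HD2; move: ((q ^ t - 1) %/ lam)%N => D2 HD2.
move: HD1 HD2 qQ nq IB; move: (q ^ t)%N => Q HD1 HD2 qQ nq IB.
have Q1 : (1 <= Q)%N by nia.
have l0 : (0 < lam)%N by lia.
have nlq : ~~ (lam %| q)%N by apply: no_dvd_q.
case=> [[A [HA HI]]|[[B [HB HI]]|[[d [Hd HI]]|[r [Hr HI]]]]].
- have [Aq|Aq] : A = q \/ (q + 1 <= A)%N by lia.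
  + left; exists 0; split; first lia. split; first lia.
    have : i = D1 by apply: (@cancel_lam lam) => //; subst A; rewrite HI [(lam * D1)%N]mulnC HD1.
    move=> ->; lia.
  + have E : ((A - q) + (q + 1 + lam * (A * D2)) = lam * i)%N by rewrite HI; clear -HD2 Aq Q1; nia.
    have /dvdnP [b Hb] := @dvd_helper lam _ _ _ E (dvdn_add lq (dvdn_mulr _ (dvdnn lam))).
    right; left; exists b.
    have Ei : i = (D1 + b * Q)%N.
      apply: (@cancel_lam lam) => //; rewrite HI mulnDr [(lam * D1)%N]mulnC HD1.
      have : (A = q + b * lam)%N by lia.
      move=> ->; clear; nia.
    have b1 : (0 < b)%N by rewrite lt0n; apply/eqP => b0; move: Hb; rewrite b0 mul0n; lia.
    split; first exact: b1. split; first lia.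
    rewrite Ei; lia.
- have [Bq|Bq] : B = (q + 1)%N \/ (q + 2 <= B)%N by lia.
  + exfalso; move/negP: nlq; apply.
    apply: (@dvd_helper lam q ((q+1) * D2 * lam)%N i); last by apply/dvdn_mull/dvdnn.
    subst B; clear -HI HD2 Q1; nia.
  + have E : ((B - q - 2) + (q + 1 + lam * (B * D2)) = lam * i)%N by clear -HI HD2 Bq Q1; nia.
    have /dvdnP [b Hb] := @dvd_helper lam _ _ _ E (dvdn_add lq (dvdn_mulr _ (dvdnn lam))).
    right; right; exists b.
    have B2 : (B <= 2 * q - 1)%N.
      case: (leqP B (2 * q-1)) => // B2.
      have : B = (2 * q)%N by lia.
      move=> E2; subst B; clear -HI IB Q1 q3; nia.
    have Ei : i = (D1 + 2 * D2 + b * Q)%N.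
      apply: (@cancel_lam lam) => //.
      have EB : (B = q + 2 + b * lam)%N by lia.
      subst B; clear -HI HD1 HD2 Q1; nia.
    split; first lia.
    rewrite Ei; lia.
- have E : ((d + 1) + lam * i = lam * D1)%N by rewrite [(lam * D1)%N]mulnC HD1; lia.
  have /dvdnP [k Hk] := @dvd_helper lam _ _ _ E (dvdn_mulr _ (dvdnn lam)).
  left; exists (- (k%:Z)).
  have Ei : (i + k = D1)%N.
    apply: (@cancel_lam lam) => //; rewrite mulnDr [(lam * D1)%N]mulnC HD1; lia.
  split; first by clear -Hk Hd q3; nia.
  split; first by clear -Hk Hd q3; nia.
  lia.
- have [rq|rq] : r = q \/ (r <= q - 1)%N by lia.
  + exfalso; move/negP: nq; apply; rewrite HI rq.
    by rewrite dvdn_addr ?dvdn_mulr ?dvdnn.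
  + have E : ((r - 1) + lam * D1 = lam * i)%N by rewrite [(lam * D1)%N]mulnC HD1; lia.
    have /dvdnP [k Hk] := @dvd_helper lam _ _ _ E (dvdn_mulr _ (dvdnn lam)).
    left; exists (k%:Z).
    have Ei : (i = D1 + k)%N.
      apply: (@cancel_lam lam) => //; rewrite mulnDr [(lam * D1)%N]mulnC HD1; lia.
    split; first by clear -Hk rq q3; nia.
    split; first by clear -Hk rq q3; nia.
    lia.
Qed.

Lemma F_to_T_odd q lam t i : (3 <= q)%N -> (2 <= lam)%N -> (lam %| q+1)%N -> odd t = true -> (q * q <= q ^ t)%N ->
  ((q ^ t.+1 - 1) %/ lam * lam = q ^ t.+1 - 1)%N -> ((q ^ t + 1) %/ lam * lam = q ^ t + 1)%N ->
  ~~ (q %| lam * i)%N -> (lam * i <= 2 * q * q ^ t - 2 * q)%N -> Fset q (q ^ t) (lam * i) -> in_T q lam t i.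
Proof.
move=> q3 l2 lq Hp qQ HD1 HD2 nq IB; rewrite /in_T Hp /= /g_val.
rewrite expnS in HD1 *.
move: HD1 HD2; move: ((q * q ^ t - 1) %/ lam)%N => D1 HD1 HD2.
move: HD2; move: ((q ^ t + 1) %/ lam)%N => D2 HD2.
move: HD1 HD2 qQ nq IB; move: (q ^ t)%N => Q HD1 HD2 qQ nq IB.
have Q1 : (1 <= Q)%N by nia.
have P1 : (1 <= q * Q)%N by nia.
have l0 : (0 < lam)%N by lia.
have nlq : ~~ (lam %| q)%N by apply: no_dvd_q.
case=> [[A [HA HI]]|[[B [HB HI]]|[[d [Hd HI]]|[r [Hr HI]]]]].
- have [Aq|[Aq|Aq]] : A = q \/ A = (q + 1)%N \/ (q + 2 <= A)%N by lia.
  + have E : (2 + lam * D1 = lam * i)%N by rewrite [(lam * D1)%N]mulnC HD1 HI Aq; lia.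
    have /dvdnP [k Hk] := @dvd_helper lam _ _ _ E (dvdn_mulr _ (dvdnn lam)).
    left; exists (k%:Z).
    have Ei : (i = D1 + k)%N.
      apply: (@cancel_lam lam) => //; rewrite mulnDr; clear -E Hk; lia.
    split; first by clear -Hk q3; nia.
    split; first by clear -Hk q3; nia.
    clear -Ei; lia.
  + exfalso; move/negP: nlq; apply.
    apply: (@dvd_helper lam q (lam * i)%N ((q+1) * D2)%N); last by apply/dvdn_mulr/dvdnn.
    subst A; clear -HI HD2 Q1; nia.
  + have E : ((A - q - 2) + (q + 1 + lam * i) = lam * (A * D2))%N by clear -HI HD2 Aq Q1; nia.
    have /dvdnP [b Hb] := @dvd_helper lam _ _ _ E (dvdn_add lq (dvdn_mulr _ (dvdnn lam))).
    right; right; exists b.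
    have Ei : i = (D1 + 2 * D2 + b * Q)%N.
      apply: (@cancel_lam lam) => //.
      have EA : (A = q + 2 + b * lam)%N by clear -Hb Aq; lia.
      subst A; clear -HI HD1 HD2 Q1 P1; nia.
    split; first by clear -Hb HA Aq; lia.
    rewrite Ei; clear; lia.
- have B2 : (B <= 2 * q - 1)%N.
    case: (leqP B (2 * q-1)) => // B2.
    have : B = (2 * q)%N by lia.
    move=> E2; subst B; clear -HI IB Q1 q3; nia.
  have E : ((B - q) + (q + 1 + lam * i) = lam * (B * D2))%N by clear -HI HD2 HB Q1; nia.
  have /dvdnP [b Hb] := @dvd_helper lam _ _ _ E (dvdn_add lq (dvdn_mulr _ (dvdnn lam))).
  right; left; exists b.
  have b1 : (0 < b)%N by rewrite lt0n; apply/eqP => b0; move: Hb; rewrite b0 mul0n; clear -HB; lia.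
  have Ei : i = (D1 + b * Q)%N.
    apply: (@cancel_lam lam) => //.
    have EB : (B = q + b * lam)%N by clear -Hb HB; lia.
    subst B; clear -HI HD1 Q1 P1; nia.
  split; first exact: b1. split; first by clear -Hb B2 HB; lia.
  rewrite Ei; clear; lia.
- have [d0|d1] : d = 0%N \/ (1 <= d)%N by lia.
  + exfalso; move/negP: nq; apply.
    have -> : (lam * i = q * Q)%N by lia.
    by rewrite dvdn_mulr.
  + have E : ((d - 1) + lam * i = lam * D1)%N by rewrite [(lam * D1)%N]mulnC HD1; clear -HI d1; lia.
    have /dvdnP [k Hk] := @dvd_helper lam _ _ _ E (dvdn_mulr _ (dvdnn lam)).
    left; exists (- (k%:Z)).
    have Ei : (i + k = D1)%N.
      apply: (@cancel_lam lam) => //; rewrite mulnDr [(lam * D1)%N]mulnC HD1; clear -Hk HI d1; lia.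
    split; first by clear -Hk Hd d1 q3; nia.
    split; first by clear -Hk Hd d1 q3; nia.
    clear -Ei; lia.
- have [rq|rq] : r = q \/ (r <= q - 1)%N by lia.
  + exfalso; move/negP: nq; apply; rewrite HI rq.
    by rewrite dvdn_addr ?dvdn_mulr ?dvdnn.
  + have E : ((r + 1) + lam * D1 = lam * i)%N by rewrite [(lam * D1)%N]mulnC HD1; lia.
    have /dvdnP [k Hk] := @dvd_helper lam _ _ _ E (dvdn_mulr _ (dvdnn lam)).
    left; exists (k%:Z).
    have Ei : (i = D1 + k)%N.
      apply: (@cancel_lam lam) => //; rewrite mulnDr [(lam * D1)%N]mulnC HD1; lia.
    split; first by clear -Hk rq Hr q3; nia.
    split; first by clear -Hk rq Hr q3; nia.
    clear -Ei; lia.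
Qed.

End ConvSec.

Lemma qeven q s : 0 < q -> (q+1) %| q ^ (2 * s) - 1.
Proof.
move=> q0.
rewrite -eqn_mod_dvd; last by rewrite expn_gt0 q0.
rewrite expnM -modnXm.
have -> : q ^ 2 = (q-1) * (q+1) + 1 by rewrite expnS expn1; nia.
by rewrite modnMDl modnXm exp1n.
Qed.

Lemma qodd q s : 0 < q -> (q+1) %| q ^ (2 * s+1) + 1.
Proof.
move=> q0.
have H := @qeven q s q0.
have P : 1 <= q ^ (2 * s) by rewrite expn_gt0 q0.
have -> : q ^ (2 * s+1) + 1 = q * (q ^ (2 * s) - 1) + (q+1).
  rewrite expnD expn1; move: P; move: (q ^ (2 * s)) => X P; nia.
by rewrite dvdn_add // dvdn_mull.
Qed.

Lemma pow2m_n q lam n m : 0 < q -> 0 < lam -> lam * n = q ^ m + 1 -> 1 < n -> q ^ (2 * m) %% n = 1.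
Proof.
move=> q0 l0 Nd n1.
have S2 : q ^ (2 * m) %% (lam * n) = 1.
  rewrite mulnC expnM Nd.
  have M1 : 1 <= q ^ m by rewrite expn_gt0 q0.
  move: M1; move: (q ^ m) => M M1.
  have -> : M ^ 2 = (M-1) * (M+1) + 1 by rewrite expnS expn1; nia.
  rewrite modnMDl modn_small //; lia.
rewrite -(modn_dvdm _ (dvdn_mull lam (dvdnn n))) S2 modn_small //.
Qed.

Lemma not_leader_Q q lam n i t : 0 < lam -> lam * n = q * q ^ t * q ^ t+1 ->
  let Q := q ^ t in let I := lam * i in
  ((I * Q) %% (q * Q * Q+1) < I \/ (I * (q * Q)) %% (q * Q * Q+1) < I \/
   (I * (Q * (q * Q * Q))) %% (q * Q * Q+1) < I \/ (I * (q * Q * (q * Q * Q))) %% (q * Q * Q+1) < I) ->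
  ~ coset_leader q n i.
Proof.
move=> l0 Nd Q I.
have Em : q ^ (t + t).+1 = q * Q * Q by rewrite expnS expnD mulnA.
case=> [H|[H|[H|H]]].
- by apply: (@not_leader q lam n i t l0); rewrite Nd.
- by apply: (@not_leader q lam n i t.+1 l0); rewrite Nd expnS.
- apply: (@not_leader q lam n i (t + (t+t).+1) l0); rewrite Nd expnD Em; exact: H.
- apply: (@not_leader q lam n i (t.+1 + (t+t).+1) l0); rewrite Nd expnD Em expnS; exact: H.
Qed.

Unset Implicit Arguments.

Theorem lemma12 (q lam t : nat) :
  prime_power q -> odd q ->
  (lam %| q + 1)%N -> (2 <= lam)%N -> (lam < q + 1)%N ->
  (2 <= t)%N ->
  let m := (2 * t + 1)%N in
  let n := ((q ^ m + 1) %/ lam)%N in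
  (* (1) *)
  (forall i : nat,
      (1 <= i)%N -> (i * lam < 2 * q ^ t.+1 - 2 * q + 1)%N ->
      (i %% q != 0)%N -> ~ in_T q lam t i ->
      coset_leader q n i /\ #|cyc_coset_set q n i| = (2 * m)%N)
  /\ (forall i : nat, in_T q lam t i -> (i %% q != 0)%N -> ~ coset_leader q n i)
  (* (2) *)
  /\ (forall i : nat,
      (2 * q ^ t.+1 - 2 * q + 1 <= i * lam)%N ->
      (i * lam <= 2 * q ^ t.+1 + 2 * q - 1)%N ->
      ~ coset_leader q n i).
Proof.
move=> [p [k [pp [k0 qe]]]] qo lq l2 lq1 t2 m n.
have q2 : 2 <= q.
  rewrite qe; apply: (leq_trans (prime_gt1 pp)).
  by rewrite -{1}(expn1 p) leq_pexp2l // prime_gt0.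
have q3 : 3 <= q.
  case: (q =P 2) => [e|ne]; first by move: qo; rewrite e.
  lia.
have q0 : 0 < q by lia.
have l0 : 0 < lam by lia.
have qQ : q * q <= q ^ t.
  have : q ^ 2 <= q ^ t by apply: leq_pexp2l; lia.
  by rewrite expnS expn1.
have Em : q ^ m = q * q ^ t * q ^ t by rewrite /m addn1 expnS mul2n -addnn expnD mulnA.
have lqm : lam %| q ^ m + 1 by apply: (dvdn_trans lq); rewrite /m; exact: (@qodd q t q0).
have Nd : lam * n = q ^ m + 1 by rewrite /n mulnC divnK.
have Nd' : lam * n = q * q ^ t * q ^ t + 1 by rewrite Nd Em.
have cop : coprime q lam by apply: (coprime_dvdr lq); rewrite addn1 coprimenS.
have nqI : forall i, i %% q != 0 -> ~~ (q %| lam * i) by move=> i; rewrite Gauss_dvdr.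
have ts := odd_double_half t.
have [TF FT] : (forall i, ~~ (q %| lam * i) -> in_T q lam t i -> Fset q (q ^ t) (lam * i)) /\
    (forall i, ~~ (q %| lam * i) -> lam * i <= 2 * q * q ^ t - 2 * q -> Fset q (q ^ t) (lam * i) -> in_T q lam t i).
  case Hp : (odd t).
  - have HD1 : (q ^ t.+1 - 1) %/ lam * lam = q ^ t.+1 - 1.
      apply: divnK; apply: (dvdn_trans lq).
      have -> : t.+1 = 2 * (t./2 + 1) by move: ts; rewrite Hp -muln2; lia.
      exact: (@qeven q _ q0).
    have HD2 : (q ^ t + 1) %/ lam * lam = q ^ t + 1.
      apply: divnK; apply: (dvdn_trans lq).
      have -> : t = 2 * t./2 + 1 by move: ts; rewrite Hp -muln2; lia.
      exact: (@qodd q _ q0).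
    split.
    + move=> i nq HT; exact: (@T_to_F_odd q lam t i q3 l2 lq Hp qQ HD1 HD2 nq HT).
    + move=> i nq IB HF; exact: (@F_to_T_odd q lam t i q3 l2 lq Hp qQ HD1 HD2 nq IB HF).
  - have HD1 : (q ^ t.+1 + 1) %/ lam * lam = q ^ t.+1 + 1.
      apply: divnK; apply: (dvdn_trans lq).
      have -> : t.+1 = 2 * t./2 + 1 by move: ts; rewrite Hp -muln2; lia.
      exact: (@qodd q _ q0).
    have HD2 : (q ^ t - 1) %/ lam * lam = q ^ t - 1.
      apply: divnK; apply: (dvdn_trans lq).
      have -> : t = 2 * t./2 by move: ts; rewrite Hp -muln2; lia.
      exact: (@qeven q _ q0).
    split.
    + move=> i nq HT; exact: (@T_to_F_even q lam t i q3 l2 lq Hp qQ HD1 HD2 nq HT).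
    + move=> i nq IB HF; exact: (@F_to_T_even q lam t i q3 l2 lq Hp qQ HD1 HD2 nq IB HF).
split; [|split].
- move=> i i1 iB iq nT.
  have nq := nqI i iq.
  have IB : lam * i <= 2 * q * q ^ t - 2 * q.
    move: iB; rewrite expnS [i * lam]mulnC; move: (lam * i) (q ^ t) => I Q; clear; lia.
  have I1 : 1 <= lam * i by rewrite muln_gt0 l0.
  have nF : ~ Fset q (q ^ t) (lam * i) by move=> HF; apply: nT; apply: FT.
  apply: (@leader_good q lam n i m q0 l0 _ Nd i1).
  + by rewrite /m; lia.
  + rewrite Nd Em.
    move: IB qQ; move: (lam * i) (q ^ t) => I Q IB qQ'.
    clear -IB qQ' q3; nia.
  + move=> j jr; rewrite Nd Em.
    have jr' : 1 <= j <= 2 * t by move: jr; rewrite /m; clear; lia.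
    by case: (@core q t (lam * i) j q3 t2 I1 IB nq jr').
- move=> i HT iq.
  have nq := nqI i iq.
  have HF := TF i nq HT.
  apply: (@not_leader_Q q lam n i t l0 Nd') => /=.
  case: HF => [[A [HA HI]]|[[B [HB HI]]|[[d [Hd HI]]|[r [Hr HI]]]]].
  + right; left; rewrite HI; exact: bad1.
  + right; right; right; exact: (bad2 q3 qQ HB HI).
  + right; right; left; exact: (bad3 q3 qQ Hd HI).
  + left; exact: (bad4 q3 qQ Hr HI).
- move=> i iL iU.
  clear TF FT ts lqm.
  rewrite expnS [i * lam]mulnC in iL iU.
  have i0 : 0 < i.
    rewrite lt0n; apply/eqP => i0; move: iL; rewrite i0 muln0.
    move: qQ; move: (q ^ t) => Q qQ'; clear -qQ' q3; nia.
  case: (boolP (q %| i)) => qi.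
  + move=> [_ Hmin].
    have n1 : 1 < n.
      have : lam < lam * n by rewrite Nd'; move: qQ; move: (q ^ t) => Q qQ'; clear -qQ' q3 lq1; nia.
      rewrite -{1}(muln1 lam) ltn_pmul2l //.
    have := Hmin ((i * q ^ (2 * m - 1)) %% n) (ex_intro _ _ erefl).
    have -> : i * q ^ (2 * m - 1) = (i %/ q) * q ^ (2 * m).
      rewrite -{1}(divnK qi) -mulnA -expnS.
      by congr (_ * q ^ _); rewrite /m; clear; lia.
    rewrite -modnMmr (@pow2m_n q lam n m q0 l0 Nd n1) muln1.
    have h2 : i %/ q < i by rewrite ltn_Pdiv.
    have h1 := leq_mod (i %/ q) n.
    move=> h3; have := leq_ltn_trans (leq_trans h3 h1) h2; by rewrite ltnn.
  + have nq : ~~ (q %| lam * i) by rewrite Gauss_dvdr.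
    apply: (@not_leader_Q q lam n i t l0 Nd') => /=.
    move: iL iU nq; move: (lam * i) => I iL iU nq.
    move: qQ iL iU nq; move: (q ^ t) => Q qQ iL iU nq.
    clear Nd Nd' Em cop nqI.
    have [h|[h|h]] : I <= 2 * q * Q - 1 \/ I = 2 * q * Q \/ 2 * q * Q + 1 <= I.
      case: (ltngtP I (2 * q * Q)) => h; [left|right; right|right; left] => //; clear -h; lia.
    * right; right; left; apply: bad5 => //; clear -h iL; lia.
    * exfalso; move/negP: nq; apply; by rewrite h -mulnA dvdn_mull // dvdn_mulr.
    * left; apply: (@bad6 q Q I (I - 2 * q * Q)) => //; clear -h iU q3; lia.
Qed.
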